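(* Consider the single-armed lazy restless bandit described in the context with $p_{0,0}>p_{1,0}$ (positively correlated arm), fixed subsidy $\eta$ and $\beta\in(0,1)$. Then $V(\pi)$, $V_S(\pi)$ and $V_{NS}(\pi)$ are decreasing in $\pi\in[0,1]$.
   Context: Single-armed lazy restless bandit: an arm has a hidden state in $\{0,1\}$ evolving as a two-state Markov chain with transition probabilities $p_{i,j}$ ($p_{i,0}+p_{i,1}=1$). During each session the chain makes exactly $K\ge1$ transitions. In each session the decision maker plays the arm or not. If played with the arm in state $i$ at session start, an ACK is received with probability $\rho_i\in[0,1]$ and the expected reward is $R_i$; if not played, subsidy $\eta$ is received and nothing observed. Standing assumptions: $\rho_0<\rho_1$, $R_0<R_1$. Belief $\pi\in[0,1]$ = probability of state $0$. $R_S(\pi)=\pi R_0+(1-\pi)R_1$, $\rho(\pi)=\pi\rho_0+(1-\pi)\rho_1$, $\gamma_1(\pi)=\frac{(1-\pi)\rho_1p_{1,0}+\pi\rho_0p_{0,0}}{\rho_1(1-\pi)+\rho_0\pi}$, $\gamma_0(\pi)=\frac{(1-\pi)(1-\rho_1)p_{1,0}+\pi(1-\rho_0)p_{0,0}}{(1-\rho_1)(1-\pi)+(1-\rho_0)\pi}$, $\gamma_2(\pi)=(p_{0,0}-p_{1,0})^K\pi+p_{1,0}\sum_{j=0}^{K-1}(p_{0,0}-p_{1,0})^j$. $V_S,V_{NS},V$ are the unique bounded solution of $V_S(\pi)=R_S(\pi)+\beta\big(\rho(\pi)V(\gamma_1(\pi))+(1-\rho(\pi))V(\gamma_0(\pi))\big)$,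 $V_{NS}(\pi)=\eta+\beta V(\gamma_2(\pi))$, $V(\pi)=\max\{V_S(\pi),V_{NS}(\pi)\}$ (a term with zero coefficient is taken to be $0$). *)

(* Defs.v *)
From Stdlib Require Import Reals Lra.
Open Scope R_scope.

(* Parameters of the arm: p00 = p_{0,0}, p10 = p_{1,0}
   (so p_{0,1} = 1 - p00, p_{1,1} = 1 - p10), rho0, rho1, R0, R1. *)

Definition RS (R0 R1 pi : R) : R := pi * R0 + (1 - pi) * R1.

Definition rhoB (rho0 rho1 pi : R) : R := pi * rho0 + (1 - pi) * rho1.

Definition gamma1 (p00 p10 rho0 rho1 pi : R) : R :=
  ((1 - pi) * rho1 * p10 + pi * rho0 * p00) / (rho1 * (1 - pi) + rho0 * pi).

Definition gamma0 (p00 p10 rho0 rho1 pi : R) : R :=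
  ((1 - pi) * (1 - rho1) * p10 + pi * (1 - rho0) * p00)
  / ((1 - rho1) * (1 - pi) + (1 - rho0) * pi).

(* K transitions per session:
   gamma2 pi = (p00-p10)^K pi + p10 * sum_{j=0}^{K-1} (p00-p10)^j *)
Definition gamma2 (K : nat) (p00 p10 pi : R) : R :=
  (p00 - p10) ^ K * pi + p10 * sum_f_R0 (fun j => (p00 - p10) ^ j) (K - 1).

Definition bounded01 (f : R -> R) : Prop :=
  exists M : R, forall pi, 0 <= pi <= 1 -> Rabs (f pi) <= M.

(* A term with zero coefficient is 0 automatically, since it is multiplied
   by that zero coefficient (and Rdiv by 0 is some real number). *)
Definition bellman_solution (K : nat) (p00 p10 rho0 rho1 R0 R1 eta beta : R)
    (VS VNS V : R -> R) : Prop :=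
  bounded01 VS /\ bounded01 VNS /\ bounded01 V /\
  forall pi, 0 <= pi <= 1 ->
    VS pi = RS R0 R1 pi
            + beta * (rhoB rho0 rho1 pi * V (gamma1 p00 p10 rho0 rho1 pi)
                      + (1 - rhoB rho0 rho1 pi) * V (gamma0 p00 p10 rho0 rho1 pi))
    /\ VNS pi = eta + beta * V (gamma2 K p00 p10 pi)
    /\ V pi = Rmax (VS pi) (VNS pi).

(* "decreasing" on [0,1], read as non-increasing *)
Definition nonincreasing01 (f : R -> R) : Prop :=
  forall x y, 0 <= x -> x <= y -> y <= 1 -> f y <= f x.

(* Main.v *)
Require Import Defs.
From Stdlib Require Import Reals Lra Psatz.
Open Scope R_scope.

Lemma frac_le a b c d : 0<b -> 0<d -> a*d <= c*b -> a/b <= c/d.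
Proof.
  intros Hb Hd H. apply Rmult_le_reg_r with (r := b*d). nra.
  replace (a/b*(b*d)) with (a*d) by (field; lra).
  replace (c/d*(b*d)) with (c*b) by (field; lra). exact H.
Qed.

Lemma w01 n D : 0 < D -> 0 <= n <= D -> 0 <= n/D <= 1.
Proof.
  intros HD [H1 H2]; split.
  - replace 0 with (0/1) by field. apply frac_le; lra.
  - apply Rle_trans with (D/D); [apply frac_le; nra | right; field; lra].
Qed.

Lemma g1_eq p00 p10 r0 r1 pi : r1*(1-pi)+r0*pi <> 0 ->
  gamma1 p00 p10 r0 r1 pi = p10 + (p00-p10)*(pi*r0/(r1*(1-pi)+r0*pi)).
Proof. intros; unfold gamma1; field; auto. Qed.

Lemma g0_eq p00 p10 r0 r1 pi : (1-r1)*(1-pi)+(1-r0)*pi <> 0 ->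
  gamma0 p00 p10 r0 r1 pi = p10 + (p00-p10)*(pi*(1-r0)/((1-r1)*(1-pi)+(1-r0)*pi)).
Proof. intros; unfold gamma0; field; auto. Qed.

Lemma coupling (m ry rx vb1 va1 vb0 va0 : R) : 0 <= m -> 0 <= ry -> ry <= rx -> rx <= 1 ->
  (ry = 0 \/ vb1 - va1 <= m) -> (rx - ry = 0 \/ vb0 - va1 <= m) ->
  (1 - rx = 0 \/ vb0 - va0 <= m) ->
  ry * vb1 + (1 - ry) * vb0 - (rx * va1 + (1 - rx) * va0) <= m.
Proof.
  intros Hm H0 H1 H2 A B C.
  assert (ry*(vb1-va1) <= ry*m) by (destruct A as [A|A]; [rewrite A; lra| nra]).
  assert ((rx-ry)*(vb0-va1) <= (rx-ry)*m) by (destruct B as [B|B]; [rewrite B; lra| nra]).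
  assert ((1-rx)*(vb0-va0) <= (1-rx)*m) by (destruct C as [C|C]; [rewrite C; lra| nra]).
  nra.
Qed.

Lemma Rmax_diff a b c e t : a - c <= t -> b - e <= t -> Rmax a b - Rmax c e <= t.
Proof. intros; unfold Rmax; destruct (Rle_dec a b); destruct (Rle_dec c e); lra. Qed.

Lemma VS_step (p00 p10 r0 r1 m x y : R) (V : R -> R) :
  0 <= p00 <= 1 -> 0 <= p10 <= 1 -> 0 <= r0 <= 1 -> 0 <= r1 <= 1 -> r0 < r1 -> p00 > p10 ->
  0 <= m -> (forall a b, 0 <= a -> a <= b -> b <= 1 -> V b - V a <= m) ->
  0 <= x -> x <= y -> y <= 1 ->
  rhoB r0 r1 y * V (gamma1 p00 p10 r0 r1 y) + (1 - rhoB r0 r1 y) * V (gamma0 p00 p10 r0 r1 y)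
  - (rhoB r0 r1 x * V (gamma1 p00 p10 r0 r1 x) + (1 - rhoB r0 r1 x) * V (gamma0 p00 p10 r0 r1 x))
  <= m.
Proof.
  intros Hp0 Hp1 Hr0 Hr1 Hr Hp Hm Hd Hx Hxy Hy.
  assert (Ey : rhoB r0 r1 y = r1*(1-y)+r0*y) by (unfold rhoB; ring).
  assert (Ex : rhoB r0 r1 x = r1*(1-x)+r0*x) by (unfold rhoB; ring).
  assert (Py : 0 <= rhoB r0 r1 y) by (rewrite Ey; nra).
  assert (Ry : rhoB r0 r1 y <= 1) by (rewrite Ey; nra).
  assert (Mxy : rhoB r0 r1 y <= rhoB r0 r1 x) by (rewrite Ey, Ex; nra).
  assert (Rx : rhoB r0 r1 x <= 1) by (rewrite Ex; nra).
  apply coupling; auto.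
  - destruct (Req_dec (rhoB r0 r1 y) 0) as [E|E]; [left; exact E| right].
    assert (D1y : 0 < r1*(1-y)+r0*y) by lra.
    assert (D1x : 0 < r1*(1-x)+r0*x) by lra.
    rewrite !g1_eq by lra.
    pose proof (w01 (x*r0) _ D1x ltac:(nra)).
    pose proof (w01 (y*r0) _ D1y ltac:(nra)).
    assert (x * r0 / (r1 * (1 - x) + r0 * x) <= y * r0 / (r1 * (1 - y) + r0 * y))
      by (apply frac_le; nra).
    apply Hd; nra.
  - destruct (Req_dec (rhoB r0 r1 x - rhoB r0 r1 y) 0) as [E|E]; [left; exact E| right].
    assert (D1x : 0 < r1*(1-x)+r0*x) by lra.
    assert (D0y : 0 < (1-r1)*(1-y)+(1-r0)*y) by lra.
    rewrite g1_eq by lra. rewrite g0_eq by lra.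
    pose proof (w01 (x*r0) _ D1x ltac:(nra)).
    pose proof (w01 (y*(1-r0)) _ D0y ltac:(nra)).
    assert (x * r0 / (r1 * (1 - x) + r0 * x) <= y * (1-r0) / ((1-r1) * (1 - y) + (1-r0) * y)).
    { apply frac_le; try lra.
      assert (x*(1-y) <= y*(1-x)) by nra.
      assert (r0*(1-r1) <= r1*(1-r0)) by nra.
      assert (0 <= x*(1-y)) by nra.
      assert (0 <= r0*(1-r1)) by nra.
      nra. }
    apply Hd; nra.
  - destruct (Req_dec (1 - rhoB r0 r1 x) 0) as [E|E]; [left; exact E| right].
    assert (D0x : 0 < (1-r1)*(1-x)+(1-r0)*x) by lra.
    assert (D0y : 0 < (1-r1)*(1-y)+(1-r0)*y) by lra.
    rewrite !g0_eq by lra.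
    pose proof (w01 (x*(1-r0)) _ D0x ltac:(nra)).
    pose proof (w01 (y*(1-r0)) _ D0y ltac:(nra)).
    assert (x * (1-r0) / ((1-r1) * (1 - x) + (1-r0) * x) <= y * (1-r0) / ((1-r1) * (1 - y) + (1-r0) * y)).
    { apply frac_le; try lra.
      assert (0 <= (1-r0)*(1-r1)) by nra.
      assert (0 <= (1-r0)*(1-r1)*(y-x)) by nra.
      nra. }
    apply Hd; nra.
Qed.

Lemma g2_props K p00 p10 x y : (1 <= K)%nat -> 0 <= p10 -> p10 < p00 -> p00 <= 1 ->
  0 <= x -> x <= y -> y <= 1 ->
  0 <= gamma2 K p00 p10 x /\ gamma2 K p00 p10 x <= gamma2 K p00 p10 y /\ gamma2 K p00 p10 y <= 1.
Proof.
  intros HK H1 H2 H3 Hx Hxy Hy. unfold gamma2.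
  set (c := p00 - p10).
  set (S := sum_f_R0 (fun j => c ^ j) (K - 1)).
  assert (Hc : 0 < c) by (unfold c; lra).
  assert (HS : 0 <= S) by (apply cond_pos_sum; intro n; apply pow_le; lra).
  assert (HG : S * (c - 1) = c ^ K - 1).
  { unfold S. rewrite GP_finite. replace (K - 1 + 1)%nat with K by lia. reflexivity. }
  assert (HcK : 0 <= c ^ K) by (apply pow_le; lra).
  assert (p10 <= 1 - c) by (unfold c; lra).
  assert (p10 * S <= (1 - c) * S) by nra.
  split; [nra | split; nra].
Qed.

Theorem lemma3 (K : nat) (p00 p10 rho0 rho1 R0 R1 eta beta : R)
  (VS VNS V : R -> R) :
  (1 <= K)%nat ->
  0 <= p00 <= 1 -> 0 <= p10 <= 1 ->
  0 <= rho0 <= 1 -> 0 <= rho1 <= 1 ->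
  rho0 < rho1 -> R0 < R1 ->
  p00 > p10 ->
  0 < beta < 1 ->
  bellman_solution K p00 p10 rho0 rho1 R0 R1 eta beta VS VNS V ->
  nonincreasing01 V /\ nonincreasing01 VS /\ nonincreasing01 VNS.
Proof.
  intros HK Hp0 Hp1 Hr0 Hr1 Hr HR Hp Hb Hbell.
  destruct Hbell as (_ & _ & (M & HM) & Heq).
  assert (step : forall m, 0 <= m -> (forall a b, 0 <= a -> a <= b -> b <= 1 -> V b - V a <= m) ->
            forall x y, 0 <= x -> x <= y -> y <= 1 ->
            VS y - VS x <= beta * m /\ VNS y - VNS x <= beta * m).
  { intros m Hm Hd x y Hx Hxy Hy.
    destruct (Heq x ltac:(lra)) as (Sx & Nx & _).
    destruct (Heq y ltac:(lra)) as (Sy & Ny & _).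
    split.
    - rewrite Sx, Sy.
      pose proof (VS_step p00 p10 rho0 rho1 m x y V Hp0 Hp1 Hr0 Hr1 Hr Hp Hm Hd Hx Hxy Hy).
      assert (RS R0 R1 y - RS R0 R1 x <= 0) by (unfold RS; nra).
      nra.
    - rewrite Nx, Ny.
      assert (G : 0 <= gamma2 K p00 p10 x /\ gamma2 K p00 p10 x <= gamma2 K p00 p10 y /\ gamma2 K p00 p10 y <= 1)
        by (apply g2_props; [exact HK | lra..]).
      destruct G as (A & B & C).
      pose proof (Hd _ _ A B C). nra. }
  set (E := fun d => exists x y, 0 <= x /\ x <= y /\ y <= 1 /\ d = V y - V x).
  destruct (completeness E) as [m [Hub Hlub]].
  { exists (2*M). intros d (x & y & Hx & Hxy & Hy & ->).
    pose proof (HM x ltac:(lra)). pose proof (HM y ltac:(lra)).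
    pose proof (Rle_abs (V y)); pose proof (Rle_abs (- V x)); rewrite Rabs_Ropp in H2; lra. }
  { exists 0, 0, 0. repeat split; lra. }
  assert (Hd : forall a b, 0 <= a -> a <= b -> b <= 1 -> V b - V a <= m).
  { intros a b Ha Hab Hb'. apply Hub. exists a, b. repeat split; lra. }
  assert (Hm0 : 0 <= m) by (apply Hub; exists 0, 0; repeat split; lra).
  assert (Hm : m <= beta * m).
  { apply Hlub. intros d (x & y & Hx & Hxy & Hy & ->).
    destruct (Heq x ltac:(lra)) as (_ & _ & Vx).
    destruct (Heq y ltac:(lra)) as (_ & _ & Vy).
    rewrite Vx, Vy. destruct (step m Hm0 Hd x y Hx Hxy Hy).
    apply Rmax_diff; lra. }
  assert (m = 0) by nra. subst m.
  split; [|split]; intros x y Hx Hxy Hy.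
  - pose proof (Hd x y Hx Hxy Hy). lra.
  - destruct (step 0 Hm0 Hd x y Hx Hxy Hy). lra.
  - destruct (step 0 Hm0 Hd x y Hx Hxy Hy). lra.
Qed.
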